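(* Let $P$ be a metacyclic $2$-group which does not have maximal class. Then every subgroup $Q\le P$ with $Q\cong C_{2^k}\times C_{2^k}$ for some $k\ge 1$ satisfies $Q=\Omega_i(P)$ for some $i\ge 0$.
   Context: A $2$-group of order $2^n$ ($n\ge2$) has maximal class if its nilpotency class is $n-1$. Metacyclic: has a cyclic normal subgroup with cyclic quotient. $\Omega_i(P)=\langle x\in P: x^{2^i}=1\rangle$. *)

(* Defs.v *)
From mathcomp Require Import all_boot all_fingroup all_solvable all_algebra.
Set Implicit Arguments. Unset Strict Implicit. Unset Printing Implicit Defensive.

Definition maximal_class2 (gT : finGroupType) (P : {set gT}) : bool :=
  (2 <= logn 2 #|P|) && (nil_class P == (logn 2 #|P|).-1).

(* Main.v *)
Require Import Defs.
From mathcomp Require Import all_boot all_fingroup all_solvable all_algebra.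
From mathcomp Require Import zify ring.
From Stdlib Require Import Classical.
Local Open Scope nat_scope.

Fixpoint gsum (t n : nat) : nat := if n is n'.+1 then (gsum t n' * t + 1)%N else 0%N.

Lemma gsumD t m n : gsum t (m + n) = (gsum t m * t ^ n + gsum t n)%N.
Proof.
elim: n => [|n IH]; first by rewrite addn0 expn0 muln1 /= addn0.
rewrite addnS /= IH expnS. ring.
Qed.

Lemma gsum_2pow t k : t %% 4 = 1 -> exists2 s, odd s & gsum t (2 ^ k) = (2 ^ k * s)%N.
Proof.
move=> t4; elim: k => [|k [s os IH]]; first by exists 1%N.
have v4 : t ^ (2 ^ k) %% 4 = 1 by rewrite -modnXm t4 exp1n.
set v := t ^ (2 ^ k) in v4.
exists (s * (v %/ 4 * 2 + 1))%N; first by rewrite oddM os addn1 /= oddM andbF.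
rewrite expnS mul2n -addnn gsumD IH.
have Hv : v = (v %/ 4 * 4 + 1)%N by rewrite {1}(divn_eq v 4) v4.
rewrite -/v {1}Hv; ring.
Qed.

Lemma odd_sq4 s : odd s -> (s ^ 2) %% 4 = 1.
Proof.
move=> os; rewrite -(odd_double_half s) os -mul2n.
have -> : (1 + 2 * s./2) ^ 2 = (s./2 * s./2 + s./2) * 4 + 1 by ring.
by rewrite modnMDl.
Qed.

Local Open Scope group_scope.
Lemma conjX_pow (gT : finGroupType) (a u : gT) t j :
  a ^ u = a ^+ t -> a ^ (u ^+ j) = a ^+ (t ^ j).
Proof.
move=> Hu; elim: j => [|j IH]; first by rewrite expg0 conjg1 expn0 expg1.
by rewrite expgSr conjgM IH conjXg Hu -expgM expnSr mulnC.
Qed.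

Lemma pow_formula (gT : finGroupType) (a u : gT) t i n :
  a ^ u = a ^+ t -> (u * a ^+ i) ^+ n = u ^+ n * a ^+ (i * gsum t n).
Proof.
move=> Hu; elim: n => [|n IH]; first by rewrite !expg0 muln0 expg0 mulg1.
rewrite expgSr IH -!mulgA (mulgA (a ^+ _) u) (conjgC (a ^+ _) u) conjXg Hu -!expgM.
rewrite expgSr -!mulgA -expgD /=; congr (_ * (_ * _ ^+ _)); ring.
Qed.

Lemma pairX (k : nat) (u : 'Z_(2^k) * 'Z_(2^k)) n : u ^+ n = (u.1 ^+ n, u.2 ^+ n).
Proof. elim: n => [|n IH]; first by []. by rewrite !expgS IH. Qed.

Lemma Zexp k (x : 'Z_(2^k)) : 0 < k -> x ^+ (2^k) = 1.
Proof. move=> k0. have := expg_cardG (in_setT x). rewrite cardsT card_ord Zp_cast //.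
 by rewrite -{1}(expn0 2) ltn_exp2l. Qed.

Lemma Zab k : abelian [set: 'Z_(2^k) * 'Z_(2^k)].
Proof. apply/centsP=> x _ y _. rewrite /commute. case: x y => [x1 x2] [y1 y2].
 change ((x1*y1, x2*y2) = (y1*x1, y2*x2)). by rewrite (Zp_mulgC x1) (Zp_mulgC x2).
Qed.

Theorem lemma4p17 (gT : finGroupType) (P : {group gT}) :
  (2.-group P)%N -> metacyclic P -> ~~ maximal_class2 P ->
  forall (Q : {group gT}) (k : nat), 1 <= k -> Q \subset P ->
    Q \isog [set: 'Z_(2 ^ k) * 'Z_(2 ^ k)] ->
    exists i : nat, Q :=: 'Ohm_i(P).
Proof.
move=> pP /metacyclicP[K [cycK nsKP cycPK]] nmax Q k k1 sQP isoQ.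
exists k.
have [sKP nKP] := andP nsKP.
have nKQ : Q \subset 'N(K) := subset_trans sQP nKP.
have k2 : 1 < 2 ^ k by rewrite -{1}(expn0 2) ltn_exp2l.
have oQ : #|Q| = (2 ^ k * 2 ^ k)%N.
  by rewrite (card_isog isoQ) cardsT card_prod card_ord Zp_cast.
have abQ : abelian Q by rewrite (isog_abelian isoQ) Zab.
have expQ : forall q, q \in Q -> q ^+ (2 ^ k) = 1.
  move=> q Qq; move: isoQ; rewrite isog_sym => /isogP[f injf imf].
  move: Qq; rewrite -imf => /morphimP[u Du _ ->].
  rewrite -morphX // pairX !Zexp //.
  exact: morph1.
case/cyclicP: (cyclicS (quotientS K sQP) cycPK) => X defX.
have : X \in Q / K by rewrite defX cycle_id.
case/morphimP => b nKb Qb defXb.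
have QKb : Q / K = <[b]> / K by rewrite defX defXb quotient_cycle.
have oQK : #|Q / K| %| 2 ^ k.
  by rewrite QKb quotient_cycle // -orderE order_dvdn -morphX // expQ // morph1.
have oQiK : #|Q :&: K| %| 2 ^ k.
  have /cyclicP[g defg] : cyclic (Q :&: K) := cyclicS (subsetIr Q K) cycK.
  have : g \in Q :&: K by rewrite defg cycle_id.
  by case/setIP=> Qg _; rewrite defg -orderE order_dvdn expQ.
have cardQ : (#|Q :&: K| * #|Q / K|)%N = #|Q|.
  by rewrite card_quotient // -indexgI Lagrange // subsetIl.
have [eQiK eQK] : #|Q :&: K| = (2 ^ k)%N /\ #|Q / K| = (2 ^ k)%N.
  move: (dvdn_leq (ltnW k2) oQK) (dvdn_leq (ltnW k2) oQiK) cardQ (ltnW k2); rewrite oQ.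
  move: (2 ^ k)%N #|Q :&: K| #|Q / K| => N x y hy hx hxy N0.
  have h1 : N * N <= x * N by rewrite -hxy leq_mul2l hy orbT.
  have h2 : N * N <= N * y by rewrite -hxy leq_mul2r hx orbT.
  rewrite leq_pmul2r // in h1; rewrite leq_pmul2l // in h2.
  by split; apply/eqP; rewrite eqn_leq ?h1 ?h2 ?hx ?hy.
have OmK : forall n, n \in K -> n ^+ (2 ^ k) = 1 -> n \in Q.
  move=> n Kn n1; have : <[n]> \subset Q :&: K.
    rewrite -(cardSg_cyclic cycK) ?cycle_subG ?subsetIr //.
    by rewrite -orderE eQiK order_dvdn n1.
  by rewrite cycle_subG => /setIP[].
have F1 : forall x, x \in P -> x ^+ (2 ^ k) = 1 -> x \in <[b]> * K.
  move=> x Px x1; have nKx := subsetP nKP x Px.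
  have : <[x]> / K \subset <[b]> / K.
    rewrite -QKb quotient_cycle // -(cardSg_cyclic cycPK) //.
    - by rewrite -orderE eQK order_dvdn -morphX // x1 morph1.
    - by rewrite cycle_subG mem_quotient.
    - exact: quotientS.
  rewrite quotientSK ?cycle_subG // => /subsetP; rewrite (normC (_ : <[b]> \subset 'N(K))) ?cycle_subG //.
  by apply; rewrite cycle_id.
case/cyclicP: cycK => a defK.
have Ka : a \in K by rewrite defK cycle_id.
have [r defr] : exists r, a ^ b = a ^+ r.
  have : a ^ b \in K by rewrite memJ_norm.
  by rewrite defK => /cycleP[r ->]; exists r.
have good_main : forall t, t %% 4 = 1%N -> a ^ b = a ^+ t -> Q :=: 'Ohm_k(P).
  move=> t t4 abt.
  have Hx : forall x, x \in P -> x ^+ (2 ^ k) = 1 -> x \in Q.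
    move=> x Px x1; have := F1 x Px x1.
    case/mulsgP=> y z /cycleP[j ->] Kz Ex.
    move: (Kz); rewrite defK => /cycleP[i Ez]; rewrite Ez in Kz Ex.
    have abj := @conjX_pow _ _ _ _ j abt.
    have tj4 : (t ^ j)%N %% 4 = 1%N by rewrite -modnXm t4 exp1n.
    have [s os Es] := @gsum_2pow _ k tj4.
    move: x1; rewrite Ex (@pow_formula _ _ _ _ i (2 ^ k)%N abj) expgAC expQ // expg1n mul1g Es.
    move/eqP; rewrite -order_dvdn mulnA => Hd.
    have : (a ^+ i) ^+ (2 ^ k) = 1.
      apply/eqP; rewrite -expgM -order_dvdn.
      have cop : coprime #[a] s.
        have : 2.-elt a := mem_p_elt pP (subsetP sKP a Ka).
        by case/p_natP => m ->; apply: coprimeXl; rewrite coprime2n.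
      by rewrite -(Gauss_dvdl (i * 2 ^ k) cop).
    move/(OmK _ Kz) => Qai.
    by rewrite groupM // groupX.
  rewrite (OhmE k pP); apply/eqP; rewrite eqEsubset; apply/andP; split.
    apply: subset_trans (subset_gen _); apply/subsetP => q Qq.
    by rewrite !inE (subsetP sQP q Qq) expQ ?eqxx.
  rewrite gen_subG; apply/subsetP => x; rewrite !inE => /andP[Px /eqP x1].
  exact: Hx.
case: (classic (exists t, t %% 4 = 1%N /\ a ^ b = a ^+ t)) => [[t [t4 abt]]|bad].
  exact: good_main t t4 abt.
have nogood : forall t, t %% 4 = 1%N -> a ^ b = a ^+ t -> False.
  by move=> t t4 abt; apply: bad; exists t.
exfalso; case/negP: nmax.
have cab : forall u v, u \in K -> v \in K -> commute u v.
  by move=> u v; rewrite defK => Hu Hv; apply: (centsP (cycle_abelian a)).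
have fixK : forall y, y \in K -> a ^ y = a.
  by move=> y Ky; rewrite conjgE (cab a y Ka Ky) mulKg.
have k1' : k = 1%N.
  apply/eqP; rewrite eqn_leq k1 andbT leqNgt; apply/negP => k2'.
  have cycK : cyclic K by rewrite defK cycle_cyclic.
  have /cyclicP[g defg] : cyclic (Q :&: K) := cyclicS (subsetIr Q K) cycK.
  have QKg : g \in Q :&: K by rewrite defg cycle_id.
  case/setIP: (QKg) => Qg Kg.
  have og : #[g] = (2 ^ k)%N by rewrite orderE -defg eQiK.
  move: (Kg); rewrite defK => /cycleP[e ge].
  have gb : g ^ b = g by rewrite conjgE (centsP abQ g Qg b Qb) mulKg.
  have : g ^+ r = g ^+ 1.
    by rewrite expg1 -{2}gb ge conjXg defr -!expgM mulnC.
  move/eqP; rewrite eq_expg_mod_order og => /eqP rk.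
  apply: (nogood r) defr.
  have d4 : (4 %| 2 ^ k)%N by rewrite (_ : 4 = 2 ^ 2)%N // dvdn_exp2l.
  by rewrite -(modn_dvdm r d4) rk modn_dvdm.
have cycK : cyclic K by rewrite defK cycle_cyclic.
have b2 : b ^+ 2 = 1 by move: (expQ b Qb); rewrite k1' expn1.
have notKb : b \notin K.
  by apply/negP => Kb; apply: (nogood 1%N) => //; rewrite expg1 fixK.
have a1 : a != 1.
  by apply/negP => /eqP a1; apply: (nogood 1%N) => //; rewrite a1 conj1g expg1.
have [m om] : {m | #[a] = (2 ^ m)%N} := p_natP (mem_p_elt pP (subsetP sKP a Ka)).
have m1 : 0 < m by case: m om => // om; case/negP: a1; rewrite -order_eq1 om.
have PK2 : #|P / K| = 2%N.
  have /cyclicP[C defC] := cycPK.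
  have : C \in P / K by rewrite defC cycle_id.
  case/morphimP => c nKc Pc defCc.
  have PKb : coset K b \in P / K by rewrite mem_quotient // (subsetP sQP).
  have /cycleP[j bj] : coset K b \in <[coset K c]> by rewrite -defCc -defC.
  have oPK : #|P / K| = #[coset K c] by rewrite defC defCc orderE.
  have [f ef] : {f | #|P / K| = (2 ^ f)%N} := p_natP (quotient_pgroup K pP).
  case: f ef => [|[|f]] ef; [ | by rewrite ef | ]; last first.
  - exfalso.
    have cb2 : coset K c ^+ (j * 2) = 1 by rewrite expgM -bj -morphX // b2 morph1.
    move/eqP: cb2; rewrite -order_dvdn -oPK ef expnSr dvdn_pmul2r // => dvj.
    have dj : (2 %| j)%N by apply: dvdn_trans dvj; rewrite expnS dvdn_mulr.
    case/dvdnP: dj => j' Ej; rewrite Ej in bj.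
    have nKd : c ^+ j' \in 'N(K) by rewrite groupX.
    have Pd : c ^+ j' \in P by rewrite groupX.
    have : coset K b = coset K ((c ^+ j') ^+ 2).
      by rewrite bj expgM -!morphX.
    move/(rcoset_kercosetP nKb (groupX _ nKd)) => /rcosetP[n Kn bE].
    have [sg ds] : exists sg, a ^ (c ^+ j') = a ^+ sg.
      have : a ^ (c ^+ j') \in K by rewrite memJ_norm // (subsetP nKP).
      by rewrite defK => /cycleP[sg ->]; exists sg.
    have sodd : odd sg.
      have gen : generator <[a]> (a ^+ sg).
        by rewrite /generator -ds cycleJ -defK (normP (subsetP nKP _ Pd)).
      rewrite generator_coprime om in gen.
      by rewrite coprime_pexpl // coprime2n in gen.
    apply: (nogood (sg ^ 2)%N (@odd_sq4 sg sodd)).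
    by rewrite bE conjgM fixK // (@conjX_pow _ _ _ _ 2 ds).
  - exfalso; move/eqP: ef; rewrite expn0 -trivg_card1 => /eqP triv.
    have : coset K b = 1 by move: PKb; rewrite triv => /set1gP.
    by move/(coset_idr nKb); apply/negP.
have iPK : #|P : K| = 2%N by rewrite -card_quotient.
have oP : #|P| = (2 ^ m.+1)%N by rewrite -(Lagrange sKP) iPK defK -orderE om expnSr.
have nabP : ~~ abelian P.
  apply/negP => abP; apply: (nogood 1%N) => //.
  by rewrite expg1 conjgE (centsP abP a (subsetP sKP a Ka) b (subsetP sQP b Qb)) mulKg.
rewrite /maximal_class2 oP pfactorK //= ltnS m1 /=.
have genP : extremal_generators P 2 m.+1 (a, b).
  by split; rewrite ?oP ?om ?(subsetP sKP) // inE -defK notKb (subsetP sQP).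
have ob : #[b] = 2%N.
  apply: nt_prime_order => //; apply: contraNneq notKb => ->; exact: group1.
case/orP: (maximal_cycle_extremal pP nabP cycK sKP iPK) => [modP|/andP[_ ext2]].
  exfalso.
  have [p p_pr [n' n'ge isoM]] := (modular_group_classP P).1 (eqP modP).
  have n'2 : 2 < n' := leq_trans (leq_addl _ 3) n'ge.
  have oPm : #|P| = (p ^ n')%N by rewrite (card_isog isoM) card_modular_group.
  have p2 : p = 2%N.
    have : (p %| 2 ^ m.+1)%N by rewrite -oP oPm dvdn_exp // ltnW // ltnW.
    by rewrite Euclid_dvdX // andbT dvdn_prime2 // => /eqP.
  subst p.
  have n'n : n' = m.+1 by apply/eqP; rewrite -(eqn_exp2l _ _ (ltnSn 1)) -oPm oP.
  subst n'.
  have m3 : 2 < m by move: n'ge; rewrite eqxx.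
  have [[x y] genxy modxy] := generators_modular_group p_pr n'2 isoM.
  case: (modular_group_structure p_pr n'2 genxy isoM modxy) => _ _ [_ oD _] _ _.
  have Dab : [~ a, b] \in P^`(1).
    by rewrite derg1; apply: mem_commg; [exact: (subsetP sKP) | exact: (subsetP sQP)].
  have w2 : [~ a, b] ^+ 2 = 1 by rewrite -oD expg_cardG.
  rewrite commgEl defr in w2.
  apply: (nogood r) defr.
  have : a ^+ (r * 2) = a ^+ 2.
    have Kw : a^-1 * a ^+ r \in K by rewrite groupM ?groupV ?groupX.
    rewrite expgM -{1}(mulKVg a (a ^+ r)) expgMn ?w2 ?mulg1 //; exact: cab.
  move/eqP; rewrite eq_expg_mod_order om => /eqP.
  have d8 : (8 %| 2 ^ m)%N by rewrite (_ : 8 = 2 ^ 3)%N // dvdn_exp2l.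
  move/(congr1 (fun z => z %% 8)%N); rewrite !modn_dvdm //.
  move=> h; clear -h. lia.
case: (extremal2_structure genP ext2 _) => [|_ [_ _ _ nilP] _ _ _].
  by rewrite ob eqxx implybT.
by rewrite nilP.
Qed.
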